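(* Let ${\mathbf{b}} \in \{A{\mathbf{z}} : {\mathbf{z}} \ge 0\}$ and suppose there exist $$\widetilde{{\mathbf{x}}}^* \in \operatorname{argmin}_{{\mathbf{x}} \geq 0} \|{\mathbf{x}}\|_0 \quad\text{subject to}\quad A{\mathbf{x}} = {\mathbf{b}}$$ and a vector ${\mathbf{c}}$ such that, with $\mathcal{J} = \mathrm{supp}(\widetilde{{\mathbf{x}}}^* )$, $$\frac{P {\mathbf{e}}_j}{\| P {\mathbf{e}}_j \|_2} \cdot {\mathbf{c}} = 1 \ \ \forall j \in \mathcal{J}, \qquad \frac{P {\mathbf{e}}_i}{\| P {\mathbf{e}}_i \|_2} \cdot {\mathbf{c}} < 1 \ \ \forall i \in \mathcal{J}^c.$$ Then for every $s \in [\|\widetilde{{\mathbf{x}}}^*\|_\infty, \infty]$, every solution ${\mathbf{y}}$ of $$\min_{0 \leq {\mathbf{x}} \leq s} \| W {\mathbf{x}} \|_1 \quad \text{subject to} \quad A {\mathbf{x}} = {\mathbf{b}}$$ also solves $\min_{0 \leq {\mathbf{x}} \leq s} \|{\mathbf{x}}\|_0$ subject to $A{\mathbf{x}} = {\mathbf{b}}$, and $\mathrm{supp}({\mathbf{y}}) = \mathrm{supp}(\widetilde{{\mathbf{x}}}^* )$.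
   Context: $A \in \mathbb{R}^{m\times n}$ is a matrix, $A^\dagger$ its Moore–Penrose pseudoinverse, and $P = A^\dagger A$ the orthogonal projection onto $\mathcal{N}(A)^\perp$. ${\mathbf{e}}_1,\dots,{\mathbf{e}}_n$ are the standard unit vectors, assumed not to lie in $\mathcal{N}(A)$, so $w_i := \|P{\mathbf{e}}_i\|_2 > 0$; $W = \mathrm{diag}(w_1,\dots,w_n)$. $\|{\mathbf{v}}\|_0 = \#\{i : v_i \neq 0\}$. Inequalities are componentwise; $s=\infty$ means only ${\mathbf{x}}\ge 0$. *)

(* Defs.v *)
From mathcomp Require Import all_boot all_order all_algebra.
Set Implicit Arguments. Unset Strict Implicit. Unset Printing Implicit Defensive.
Import Order.TTheory GRing.Theory Num.Theory.
Local Open Scope ring_scope.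

Section Defs.
Variable R : rcfType.

(* X is the Moore-Penrose pseudoinverse of A (the four Penrose conditions;
   such an X exists and is unique). *)
Definition is_MP_pinv m n (A : 'M[R]_(m, n)) (X : 'M[R]_(n, m)) : Prop :=
  [/\ A *m X *m A = A, X *m A *m X = X,
      (A *m X)^T = A *m X & (X *m A)^T = X *m A].

Definition evec n (i : 'I_n) : 'cV[R]_n := delta_mx i 0.

Definition dotv n (u v : 'cV[R]_n) : R := \sum_k u k 0 * v k 0.
Definition norm2 n (u : 'cV[R]_n) : R := Num.sqrt (dotv u u).
Definition norm1 n (u : 'cV[R]_n) : R := \sum_k `|u k 0|.
Definition norminf n (u : 'cV[R]_n) : R := \big[Num.max/0]_k `|u k 0|.

Definition supp n (u : 'cV[R]_n) : {set 'I_n} := [set i | u i 0 != 0].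
Definition l0 n (u : 'cV[R]_n) : nat := #|supp u|.

(* componentwise 0 <= x (and x <= s when s = Some t; s = None means s = oo) *)
Definition nonneg n (x : 'cV[R]_n) : Prop := forall i, 0 <= x i 0.
Definition boxed n (s : option R) (x : 'cV[R]_n) : Prop :=
  forall i, 0 <= x i 0 /\ (if s is Some t then x i 0 <= t else True : Prop).

(* P = A^dagger A,  w_i = ||P e_i||_2,  W = diag(w) *)
Definition wcoef m n (A : 'M[R]_(m, n)) (Ad : 'M[R]_(n, m)) (i : 'I_n) : R :=
  norm2 ((Ad *m A) *m evec i).
Definition Wmat m n (A : 'M[R]_(m, n)) (Ad : 'M[R]_(n, m)) : 'M[R]_n :=
  diag_mx (\row_i wcoef A Ad i).

Definition is_argmin n (feas : 'cV[R]_n -> Prop) (f : 'cV[R]_n -> R) x : Prop :=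
  feas x /\ forall y, feas y -> f x <= f y.
Definition is_argmin_nat n (feas : 'cV[R]_n -> Prop) (f : 'cV[R]_n -> nat) x : Prop :=
  feas x /\ forall y, feas y -> (f x <= f y)%N.
Definition ext_ge (lo : R) (s : option R) : Prop :=
  if s is Some t then lo <= t else True.
End Defs.

(* Main.v *)
Require Import Defs.
From mathcomp Require Import all_boot all_order all_algebra.
From mathcomp Require Import lra.
Import Order.TTheory GRing.Theory Num.Theory.
Local Open Scope ring_scope.

Lemma evec_entry (R : rcfType) p n (M : 'M[R]_(p, n)) i k :
  (M *m evec R i) k 0 = M k i.
Proof. by rewrite /evec -colE mxE. Qed.

Lemma norm2_gt0 (R : rcfType) n (v : 'cV[R]_n) : v != 0 -> 0 < norm2 v.
Proof.
move=> hv; rewrite /norm2 sqrtr_gt0 /dotv.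
case: (boolP [exists k, v k 0 != 0]) => [/existsP [k hk]|].
  rewrite (bigD1 k) //=.
  have h1 : 0 < v k 0 * v k 0 by rewrite -expr2 exprn_even_gt0.
  have h2 : 0 <= \sum_(i | i != k) v i 0 * v i 0.
    by apply: sumr_ge0 => i _; rewrite -expr2 sqr_ge0.
  lra.
move/existsPn => h; exfalso; move/eqP: hv; apply.
apply/matrixP => i j; rewrite (ord1 j) mxE.
by move: (h i); rewrite negbK => /eqP.
Qed.

Lemma const_sum {R : rcfType} m n (A : 'M[R]_(m, n)) (Ad : 'M[R]_(n, m))
  (c : 'cV[R]_n) (x : 'cV[R]_n) :
  \sum_i (\sum_k (Ad *m A) k i * c k 0) * x i 0 =
  \sum_k c k 0 * (Ad *m (A *m x)) k 0.
Proof.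
rewrite (eq_bigr (fun i => \sum_k (Ad *m A) k i * c k 0 * x i 0)); last first.
  by move=> i _; rewrite mulr_suml.
rewrite exchange_big /=; apply: eq_bigr => k _.
rewrite mulmxA mxE mulr_sumr; apply: eq_bigr => i _.
by rewrite mulrA [c k 0 * _]mulrC.
Qed.

Theorem corollary2 (R : rcfType) (m n : nat) (A : 'M[R]_(m, n))
  (Ad : 'M[R]_(n, m)) (b : 'cV[R]_m) (xs : 'cV[R]_n) (c : 'cV[R]_n) :
  is_MP_pinv A Ad ->
  (forall i : 'I_n, A *m evec R i != 0) ->
  (exists z : 'cV[R]_n, nonneg z /\ A *m z = b) ->
  is_argmin_nat (fun x => nonneg x /\ A *m x = b) (@l0 R n) xs ->
  (forall j, j \in supp xs ->
     dotv ((norm2 ((Ad *m A) *m evec R j))^-1 *: ((Ad *m A) *m evec R j)) c = 1) ->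
  (forall i, i \notin supp xs ->
     dotv ((norm2 ((Ad *m A) *m evec R i))^-1 *: ((Ad *m A) *m evec R i)) c < 1) ->
  forall s : option R,
    ext_ge (norminf xs) s ->
    forall y : 'cV[R]_n,
      is_argmin (fun x => boxed s x /\ A *m x = b)
                (fun x => norm1 (Wmat A Ad *m x)) y ->
      is_argmin_nat (fun x => boxed s x /\ A *m x = b) (@l0 R n) y
      /\ supp y = supp xs.
Proof.
move=> [hA1 _ _ _] hAe _ [[xsnn xsb] xsmin] hJ hJc s hs y [[ybox yb] ymin].
set P := Ad *m A.
set w := fun i => norm2 (P *m evec R i).
set d := fun i => \sum_k P k i * c k 0.
have wpos : forall i, 0 < w i.
  move=> i; apply: norm2_gt0; apply/negP => /eqP h0.
  move/negP: (hAe i); apply; apply/eqP.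
  have h0' : Ad *m A *m evec R i = 0 := h0.
  by rewrite -hA1 -!mulmxA [Ad *m (A *m _)]mulmxA h0' mulmx0.
have hdot : forall i, dotv ((w i)^-1 *: (P *m evec R i)) c = (w i)^-1 * d i.
  move=> i; rewrite /dotv /d mulr_sumr; apply: eq_bigr => k _.
  by rewrite mxE evec_entry mulrA.
have dJ : forall i, i \in supp xs -> d i = w i.
  move=> i hi; have := hJ i hi; rewrite -/P -/(w i) hdot => h.
  have := wpos i => hw.
  by rewrite -[d i](mulVKf (lt0r_neq0 hw)) h mulr1.
have dJc : forall i, i \notin supp xs -> d i < w i.
  move=> i hi; have := hJc i hi; rewrite -/P -/(w i) hdot => h.
  have := wpos i => hw.
  by rewrite -[d i](mulVKf (lt0r_neq0 hw)) -[X in _ < X]mulr1 (ltr_pM2l hw).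
have hnorm : forall x : 'cV[R]_n, nonneg x ->
    norm1 (Wmat A Ad *m x) = \sum_i w i * x i 0.
  move=> x hx; rewrite /norm1 /Wmat mul_diag_mx; apply: eq_bigr => i _.
  rewrite !mxE ger0_norm //; apply: mulr_ge0; last exact: hx.
  exact: ltW (wpos i).
have ynn : nonneg y by move=> i; case: (ybox i).
have K := @const_sum R m n A Ad c.
have xsbox : boxed s xs.
  move=> i; split; first exact: xsnn.
  case: s hs {ybox ymin} => // t /= ht; apply: le_trans ht.
  rewrite /norminf (bigD1 i) //= le_max.
  by rewrite ger0_norm ?lexx ?xsnn.
have hxs : \sum_i w i * xs i 0 = \sum_i d i * xs i 0.
  apply: eq_bigr => i _; case: (boolP (i \in supp xs)) => hi.
    by rewrite dJ.
  by move: hi; rewrite inE negbK => /eqP ->; rewrite !mulr0.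
have hle := ymin xs (conj xsbox xsb).
rewrite !hnorm // hxs K xsb -yb -K in hle.
have h0 : \sum_i (w i - d i) * y i 0 = 0.
  have hge : 0 <= \sum_i (w i - d i) * y i 0.
    apply: sumr_ge0 => i _; apply: mulr_ge0; last exact: ynn.
    rewrite subr_ge0; case: (boolP (i \in supp xs)) => hi.
      by rewrite dJ.
    exact: ltW (dJc i hi).
  have : \sum_i (w i - d i) * y i 0 = \sum_i w i * y i 0 - \sum_i d i * y i 0.
    by rewrite -sumrB; apply: eq_bigr => i _; rewrite mulrBl.
  move=> hid; rewrite hid in hge *; apply/eqP; rewrite eq_le hge andbT subr_le0; exact: hle.
have ysub : supp y \subset supp xs.
  apply/subsetP => i; rewrite [i \in supp y]inE => hyi.
  apply/negPn/negP => hi.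
  have hg : forall j, true -> 0 <= (w j - d j) * y j 0.
    move=> j _; apply: mulr_ge0; last exact: ynn.
    rewrite subr_ge0; case: (boolP (j \in supp xs)) => hj; [by rewrite dJ|exact: ltW (dJc j hj)].
  have := psumr_eq0P hg h0 (i:=i) isT.
  move/eqP; rewrite mulf_eq0 subr_eq0 (negbTE hyi) orbF => /eqP h.
  by have := dJc i hi; rewrite h ltxx.
have hl0 := xsmin y (conj ynn yb).
have heq : supp y = supp xs.
  by apply/eqP; rewrite eqEcard ysub.
split => //; split; first by [].
move=> z [zbox zb]; rewrite /l0 heq.
apply: xsmin; split => //; move=> i; by case: (zbox i).
Qed.
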